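(* Let $Z\subset\mathbb{R}^d$ be a zonotope and let $Z_1=\lambda_1Z+x_1$ and $Z_2=\lambda_2Z+x_2$ ($\lambda_1,\lambda_2>0$) be homothets of $Z$ with $Z_1\cap Z_2\neq\emptyset$ and $\lambda_1\ge\lambda_2$. Then $Z_1$ contains at least one vertex of $Z_2$.
   Context: A zonotope is a centrally symmetric convex polytope all of whose faces are centrally symmetric. *)

(* Defs.v *)
From HB Require Import structures.
From mathcomp Require Import all_boot all_order all_algebra.
From mathcomp Require Import reals.
Set Implicit Arguments. Unset Strict Implicit. Unset Printing Implicit Defensive.
Import Order.TTheory GRing.Theory Num.Theory.
Local Open Scope ring_scope.

Section Zonotopes.
Variables (R : realType) (d : nat).
Notation pt := 'rV[R]_d.

Definition dotp (u v : pt) : R := \sum_(i < d) u 0 i * v 0 i.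

Definition conv_hull (s : seq pt) : pt -> Prop := fun x =>
  exists w : 'I_(size s) -> R,
    [/\ forall i, 0 <= w i, \sum_i w i = 1 & x = \sum_i w i *: s`_i].

Definition polytope (P : pt -> Prop) : Prop :=
  exists s : seq pt, forall x, P x <-> conv_hull s x.

Definition face (P F : pt -> Prop) : Prop :=
  (forall x, F x <-> P x) \/
  exists (a : pt) (c : R), (forall x, P x -> dotp a x <= c) /\
    (forall x, F x <-> (P x /\ dotp a x = c)).

Definition vertex (P : pt -> Prop) (v : pt) : Prop :=
  face P (fun x => x = v).

Definition centrally_symmetric (S : pt -> Prop) : Prop :=
  exists c : pt, forall x, S x -> S (2%:R *: c - x).

(* zonotope: a (centrally symmetric) convex polytope all of whose faces are
   centrally symmetric (P itself is one of its faces) *)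
Definition zonotope (Z : pt -> Prop) : Prop :=
  polytope Z /\ forall F, face Z F -> centrally_symmetric F.

Definition homothet (lambda : R) (x : pt) (Z : pt -> Prop) : pt -> Prop :=
  fun y => exists2 z, Z z & y = lambda *: z + x.

End Zonotopes.

(* Main.v *)
Require Import Defs.
From HB Require Import structures.
From mathcomp Require Import all_boot all_order all_algebra.
From mathcomp Require Import reals classical_sets.
From mathcomp Require Import ring lra.
From Stdlib Require Import Classical.
Import Order.TTheory GRing.Theory Num.Theory.
Local Open Scope ring_scope.
Set Implicit Arguments. Unset Strict Implicit. Unset Printing Implicit Defensive.

Lemma dotpDr (R : realType) n (u v w : 'rV[R]_n) : dotp u (v + w) = dotp u v + dotp u w.
Proof. rewrite /dotp -big_split /=; apply: eq_bigr => i _; rewrite !mxE; ring. Qed.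
Lemma dotpDl (R : realType) n (u v w : 'rV[R]_n) : dotp (v + w) u = dotp v u + dotp w u.
Proof. rewrite /dotp -big_split /=; apply: eq_bigr => i _; rewrite !mxE; ring. Qed.
Lemma dotpZr (R : realType) n (u v : 'rV[R]_n) k : dotp u (k *: v) = k * dotp u v.
Proof. rewrite /dotp mulr_sumr; apply: eq_bigr => i _; rewrite !mxE; ring. Qed.
Lemma dotpZl (R : realType) n (u v : 'rV[R]_n) k : dotp (k *: v) u = k * dotp v u.
Proof. rewrite /dotp mulr_sumr; apply: eq_bigr => i _; rewrite !mxE; ring. Qed.
Lemma dotpNr (R : realType) n (u v : 'rV[R]_n) : dotp u (- v) = - dotp u v.
Proof. rewrite /dotp -sumrN; apply: eq_bigr => i _; rewrite !mxE; ring. Qed.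
Lemma dotpNl (R : realType) n (u v : 'rV[R]_n) : dotp (- v) u = - dotp v u.
Proof. rewrite /dotp -sumrN; apply: eq_bigr => i _; rewrite !mxE; ring. Qed.
Lemma dotpBr (R : realType) n (u v w : 'rV[R]_n) : dotp u (v - w) = dotp u v - dotp u w.
Proof. by rewrite dotpDr dotpNr. Qed.
Lemma dotpBl (R : realType) n (u v w : 'rV[R]_n) : dotp (v - w) u = dotp v u - dotp w u.
Proof. by rewrite dotpDl dotpNl. Qed.
Lemma dotp0r (R : realType) n (u : 'rV[R]_n) : dotp u 0 = 0.
Proof. rewrite /dotp big1 // => i _; rewrite mxE; ring. Qed.
Lemma dotp0l (R : realType) n (u : 'rV[R]_n) : dotp 0 u = 0.
Proof. rewrite /dotp big1 // => i _; rewrite mxE; ring. Qed.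
Lemma dotp_gt0 (R : realType) n (u : 'rV[R]_n) : u != 0 -> 0 < dotp u u.
Proof.
move=> hu; rewrite lt_def; apply/andP; split; last first.
  by rewrite /dotp sumr_ge0 // => i _; rewrite -expr2 sqr_ge0.
apply/negP => /eqP h; move/eqP: hu; apply; apply/rowP => j.
have := h; rewrite /dotp => /eqP; rewrite psumr_eq0; last by move=> i _; rewrite -expr2 sqr_ge0.
move=> /allP /(_ j (mem_index_enum j)) /=; rewrite mulf_eq0 orbb => /eqP ->.
by rewrite mxE.
Qed.

Fixpoint cw (R : realType) n (l : seq 'rV[R]_n) (x : 'rV[R]_n) (k : R) : Prop :=
  match l with
  | [::] => x = 0 /\ k = 0
  | a :: l' => exists2 t, 0 <= t & cw l' (x - t *: a) (k - t)
  end.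

Lemma cw_ge0 (R : realType) n (l : seq 'rV[R]_n) x k : cw l x k -> 0 <= k.
Proof.
elim: l x k => [|a l IH] x k /=; first by case=> _ ->.
case=> t t0 /IH; lra.
Qed.

Lemma cw_dot (R : realType) n (l : seq 'rV[R]_n) x k b e :
  (forall q, q \in l -> dotp b q <= e) -> cw l x k -> dotp b x <= k * e.
Proof.
elim: l x k => [|a l IH] x k /= hl; first by case=> -> ->; rewrite dotp0r mul0r.
case=> t t0 /IH h.
have h1 : dotp b (x - t *: a) <= (k - t) * e.
  by apply: h => q ql; apply: hl; rewrite in_cons ql orbT.
have h2 : dotp b a <= e by apply: hl; rewrite in_cons eqxx.
move: h1; rewrite dotpBr dotpZr => h1.
have h3 : t * dotp b a <= t * e by rewrite ler_wpM2l.
nra.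
Qed.

Lemma cw_dot_ge (R : realType) n (l : seq 'rV[R]_n) x k b e :
  (forall q, q \in l -> e <= dotp b q) -> cw l x k -> k * e <= dotp b x.
Proof.
move=> hl hx; have := @cw_dot R n l x k (- b) (- e).
rewrite dotpNl; have h: forall q, q \in l -> dotp (- b) q <= - e.
  by move=> q /hl; rewrite dotpNl lerN2.
move=> /(_ h hx); lra.
Qed.

Lemma cw_eq0 (R : realType) n (l : seq 'rV[R]_n) x : cw l x 0 -> x = 0.
Proof.
elim: l x => [|a l IH] x /=; first by case.
case=> t t0 h; have := cw_ge0 h => h'.
have ht : t = 0 by lra.
by move: h; rewrite ht subr0 scale0r subr0 => /IH.
Qed.

Lemma cw_add (R : realType) n (l : seq 'rV[R]_n) x y k k' :
  cw l x k -> cw l y k' -> cw l (x + y) (k + k').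
Proof.
elim: l x y k k' => [|a l IH] x y k k' /=.
  by case=> -> -> [-> ->]; rewrite !addr0.
case=> t t0 hx [t' t'0 hy]; exists (t + t'); first lra.
have := IH _ _ _ _ hx hy.
have -> : x - t *: a + (y - t' *: a) = x + y - (t + t') *: a.
  by apply/rowP => j; rewrite !mxE; ring.
by have -> : k - t + (k' - t') = k + k' - (t + t') by ring.
Qed.

Lemma cw_scale (R : realType) n (l : seq 'rV[R]_n) x k th :
  0 <= th -> cw l x k -> cw l (th *: x) (th * k).
Proof.
move=> th0; elim: l x k => [|a l IH] x k /=.
  by case=> -> ->; rewrite scaler0 mulr0.
case=> t t0 /IH h; exists (th * t); first by rewrite mulr_ge0.
have -> : th *: x - (th * t) *: a = th *: (x - t *: a).
  by apply/rowP => j; rewrite !mxE; ring.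
by have -> : th * k - th * t = th * (k - t) by ring.
Qed.

Lemma cw_filter_mono (R : realType) n (l : seq 'rV[R]_n) (P P' : pred 'rV[R]_n) x k :
  (forall q, q \in l -> P' q -> P q) -> cw (filter P' l) x k -> cw (filter P l) x k.
Proof.
elim: l x k => [|a l IH] x k //= hl.
have hl' : forall q, q \in l -> P' q -> P q.
  by move=> q ql; apply: hl; rewrite in_cons ql orbT.
case: (boolP (P' a)) => hP'.
  rewrite (hl a (mem_head a l) hP') /=.
  by case=> t t0 /(IH _ _ hl') h; exists t.
move=> /(IH _ _ hl') h; case: (P a) => //=.
by exists 0 => //; rewrite scale0r !subr0.
Qed.

Lemma cw_filter_sub (R : realType) n (l : seq 'rV[R]_n) (P : pred 'rV[R]_n) x k :
  cw (filter P l) x k -> cw l x k.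
Proof.
move=> h; rewrite -(filter_predT l); apply: (cw_filter_mono (P' := P)) => //.
Qed.

Lemma cw_to_filter (R : realType) n (l : seq 'rV[R]_n) a c x k :
  (forall q, q \in l -> dotp a q <= c) -> cw l x k -> dotp a x = k * c ->
  cw (filter (fun q => dotp a q == c) l) x k.
Proof.
elim: l x k => [|q l IH] x k //= hl.
have hl' : forall q', q' \in l -> dotp a q' <= c.
  by move=> q' ql; apply: hl; rewrite in_cons ql orbT.
have hq : dotp a q <= c by apply: hl; rewrite mem_head.
case=> t t0 hx hax.
have hd := cw_dot hl' hx.
move: hd; rewrite dotpBr dotpZr => hd.
case: (eqVneq (dotp a q) c) => hqc /=.
  exists t => //; apply: IH => //; rewrite dotpBr dotpZr hqc hax; ring.
have ht : t = 0.
  have hlt : dotp a q < c by rewrite lt_def eq_sym hqc hq.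
  nra.
apply: IH => //; move: hx; rewrite ht scale0r !subr0 //.
Qed.

Lemma cw_all_eq (R : realType) n (l : seq 'rV[R]_n) p x k :
  (forall q, q \in l -> q = p) -> cw l x k -> x = k *: p.
Proof.
elim: l x k => [|q l IH] x k /= hl; first by case=> -> ->; rewrite scale0r.
have hl' : forall q', q' \in l -> q' = p.
  by move=> q' ql; apply: hl; rewrite in_cons ql orbT.
case=> t t0 /(IH _ _ hl') h; have hq := hl q (mem_head q l).
have -> : x = (x - t *: q) + t *: q by rewrite subrK.
by rewrite h hq; apply/rowP => j; rewrite !mxE; ring.
Qed.

Lemma cw_shift (R : realType) n (l : seq 'rV[R]_n) y x k :
  cw (map (fun q => q - y) l) x k -> cw l (x + k *: y) k.
Proof.
elim: l x k => [|q l IH] x k /=; first by case=> -> ->; rewrite scale0r addr0.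
case=> t t0 /IH h; exists t => //.
by have <- : x - t *: (q - y) + (k - t) *: y = x + k *: y - t *: q
  by apply/rowP => j; rewrite !mxE; ring.
Qed.

Lemma cw_conv (R : realType) n (l : seq 'rV[R]_n) x k :
  (exists w : 'I_(size l) -> R,
    [/\ forall i, 0 <= w i, \sum_i w i = k & x = \sum_i w i *: l`_i]) <-> cw l x k.
Proof.
elim: l x k => [|a l IH] x k /=.
  split.
    by case=> w [_]; rewrite !big_ord0 => <- ->.
  by case=> -> ->; exists (fun _ => 0); split => //; rewrite big_ord0.
split.
  case=> w [w0 ws wx]; exists (w ord0) => //; apply/IH.
  exists (fun i => w (lift ord0 i)); split => //.
    by move: ws; rewrite big_ord_recl => <-; ring.
  by rewrite wx big_ord_recl /=; apply/rowP => j; rewrite !mxE; ring.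
case=> t t0 /IH [w [w0 ws wx]].
exists (fun i => if unlift ord0 i is Some j then w j else t); split.
- by move=> i; case: (unlift ord0 i).
- rewrite big_ord_recl unlift_none.
  under eq_bigr => i _ do rewrite liftK.
  by rewrite ws; ring.
- rewrite big_ord_recl unlift_none.
  under eq_bigr => i _ do rewrite liftK /=.
  by rewrite -wx; apply/rowP => j; rewrite !mxE; ring.
Qed.


Lemma cw_map_lin (R : realType) n (l : seq 'rV[R]_n) (be : R) b a y k :
  cw (map (fun q => be *: q - dotp b q *: a) l) y k ->
  exists z, cw l z k /\ y = be *: z - dotp b z *: a.
Proof.
elim: l y k => [|q l IH] y k /=.
  by case=> -> ->; exists 0; split => //; rewrite scaler0 dotp0r scale0r subr0.
case=> t t0 /IH [z [hz hy]]; exists (z + t *: q); split.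
  by exists t => //; rewrite addrK.
have -> : y = (y - t *: (be *: q - dotp b q *: a)) + t *: (be *: q - dotp b q *: a)
  by rewrite subrK.
rewrite hy dotpDr dotpZr; apply/rowP => j; rewrite !mxE; ring.
Qed.

Lemma farkas (R : realType) n N : forall (l : seq 'rV[R]_n) x, size l = N ->
  (exists k, cw l x k) \/
  (exists b, (forall q, q \in l -> dotp b q <= 0) /\ 0 < dotp b x).
Proof.
elim: N => [|N IH] l x.
  case: l => // _; case: (eqVneq x 0) => hx.
    by left; exists 0.
  by right; exists x; split => //; apply: dotp_gt0.
case: l => // a l [] sl.
case: (IH l x sl) => [[k hk]|[b [hb hbx]]].
  by left; exists k; exists 0 => //; rewrite scale0r !subr0.
case: (lerP (dotp b a) 0) => hba.
  right; exists b; split => // q; rewrite in_cons => /orP [/eqP -> //|]; exact: hb.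
set be := dotp b a.
pose phi := fun q => be *: q - dotp b q *: a.
have sl' : size (map phi l) = N by rewrite size_map.
case: (IH (map phi l) (be *: x - dotp b x *: a) sl') => [[k hk]|[b' [hb' hbx']]].
  left; have [z [hz hzx]] := cw_map_lin hk.
  have hbz : dotp b z <= k * 0 by apply: (cw_dot hb hz).
  set tau := (dotp b x - dotp b z) / be.
  have htau : 0 <= tau.
    rewrite /tau divr_ge0 //; last exact: ltW.
    rewrite mulr0 in hbz; lra.
  exists (k + tau); exists tau => //.
  have -> : x - tau *: a = z.
    have hbe : be != 0 by rewrite gt_eqF.
    apply/rowP => j; have := congr1 (fun v : 'rV[R]_n => v 0 j) hzx.
    rewrite !mxE /tau => hj.
    apply: (mulfI hbe).
    transitivity (be * x 0 j - (dotp b x - dotp b z) * a 0 j); first by field.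
    rewrite mulrBl; lra.
  by rewrite addrK.
right; exists (b' - (dotp b' a / be) *: b); split.
  move=> q; rewrite in_cons => /orP [/eqP ->|ql].
    rewrite dotpBl dotpZl /be; have hbe : be != 0 by rewrite gt_eqF.
    rewrite /be in hbe; rewrite divfK //; lra.
  have := hb' (phi q) (map_f phi ql); rewrite /phi dotpBr !dotpZr.
  rewrite dotpBl dotpZl => h.
  have -> : dotp b' q - dotp b' a / be * dotp b q
    = (be * dotp b' q - dotp b q * dotp b' a) / be by field; rewrite gt_eqF.
  by rewrite mulr_le0_ge0 // invr_ge0 ltW.
rewrite dotpBl dotpZl; move: hbx'; rewrite dotpBr !dotpZr => h.
have -> : dotp b' x - dotp b' a / be * dotp b x
    = (be * dotp b' x - dotp b x * dotp b' a) / be by field; rewrite gt_eqF.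
by rewrite divr_gt0.
Qed.


Lemma dotp_row_mx (R : realType) n m (u1 v1 : 'rV[R]_n) (u2 v2 : 'rV[R]_m) :
  dotp (row_mx u1 u2) (row_mx v1 v2) = dotp u1 v1 + dotp u2 v2.
Proof.
rewrite /dotp big_split_ord /=; congr (_ + _); apply: eq_bigr => i _.
  by rewrite !row_mxEl.
by rewrite !row_mxEr.
Qed.

Lemma dotp1 (R : realType) (u : 'rV[R]_1) k : dotp u (k%:M) = u 0 0 * k.
Proof. by rewrite /dotp big_ord1 !mxE eqxx mulr1n. Qed.

Lemma cw_map_lift (R : realType) n (l : seq 'rV[R]_n) Y k :
  cw (map (fun q => row_mx q (1%:M : 'M[R]_1)) l) Y k ->
  exists x, cw l x k /\ Y = row_mx x (k%:M).
Proof.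
elim: l Y k => [|q l IH] Y k /=.
  by case=> -> ->; exists 0; split => //; rewrite (_ : 0%:M = 0) ?row_mx0 //; apply/matrixP => i j; rewrite !mxE; case: (_ == _).
case=> t t0 /IH [x [hx hY]]; exists (x + t *: q); split.
  by exists t => //; rewrite addrK.
have -> : Y = (Y - t *: row_mx q 1%:M) + t *: row_mx q 1%:M by rewrite subrK.
rewrite hY scale_row_mx add_row_mx; congr row_mx.
by apply/rowP => j; rewrite !mxE; case: (_ == _); rewrite /=; ring.
Qed.

Lemma strict_sep (R : realType) n (l : seq 'rV[R]_n) y : ~ cw l y 1 ->
  exists b be, (forall q, q \in l -> dotp b q <= be) /\ be < dotp b y.
Proof.
move=> hy.
pose lift := fun q : 'rV[R]_n => row_mx q (1%:M : 'M[R]_1).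
case: (@farkas R (n + 1) (size l) (map lift l) (lift y) (size_map _ _)) =>
   [[k hk]|[B [hB hBy]]].
  have [x [hx hxy]] := cw_map_lift hk.
  have [h1 h2] := eq_row_mx hxy.
  have hk1 : k = 1.
    have := congr1 (fun M : 'M[R]_1 => M 0 0) h2; rewrite /= !mxE eqxx /=.
    by rewrite mulr1n => ->.
  by exfalso; apply: hy; rewrite h1 -hk1.
exists (lsubmx B), (- rsubmx B 0 0); split.
  move=> q ql; have := hB (lift q) (map_f lift ql).
  rewrite -{1}(hsubmxK B) /lift dotp_row_mx dotp1 mulr1; lra.
move: hBy; rewrite -{1}(hsubmxK B) /lift dotp_row_mx dotp1 mulr1; lra.
Qed.


Lemma exists_ub (R : realType) n (f : 'rV[R]_n -> R) (l : seq 'rV[R]_n) :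
  exists K, forall q, q \in l -> f q <= K.
Proof.
elim: l => [|a l [K hK]]; first by exists 0.
exists (Num.max (f a) K) => q; rewrite in_cons => /orP [/eqP ->|/hK h].
  by rewrite le_max lexx.
by rewrite le_max h orbT.
Qed.

Lemma exists_eps (R : realType) n (l : seq 'rV[R]_n) a c b e :
  exists2 eps : R, 0 < eps & forall q, q \in l -> dotp a q < c ->
     dotp a q + eps * (dotp b q - e) < c.
Proof.
elim: l => [|q l [e0 e00 he0]]; first by exists 1.
case: (ltP (dotp a q) c) => hq; last first.
  exists e0 => // q'; rewrite in_cons => /orP [/eqP ->|/he0 //]; lra.
set e1 := (c - dotp a q) / (`|dotp b q - e| + 1).
have he1 : 0 < e1 by rewrite divr_gt0 //; [lra| rewrite ltr_wpDl].
have he1' : e1 * (dotp b q - e) < c - dotp a q.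
  have h1 : e1 * (dotp b q - e) <= e1 * `|dotp b q - e|.
    by apply: ler_wpM2l; [exact: ltW | exact: ler_norm].
  have h2 : e1 * `|dotp b q - e| < c - dotp a q.
    rewrite /e1 mulrAC ltr_pdivrMr; last by rewrite ltr_wpDl.
    have : 0 < c - dotp a q by lra.
    have : 0 <= `|dotp b q - e| by [].
    nra.
  lra.
have key : forall eps0 eps (u : R), 0 < eps -> eps <= eps0 -> 0 < c - dotp a q ->
  eps0 * u < c - dotp a q -> eps * u < c - dotp a q.
  move=> eps0 eps u h0 h1 h2 h3; case: (lerP u 0) => hu; nra.
exists (Num.min e0 e1); first by rewrite lt_min e00 he1.
move=> q'; rewrite in_cons => /orP [/eqP -> _|ql hl].
  have := key e1 (Num.min e0 e1) (dotp b q - e); rewrite lt_min e00 he1 ge_min lexx orbT.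
  move=> /(_ isT isT); lra.
have := he0 q' ql hl => h.
have := key e0 (Num.min e0 e1) (dotp b q' - e); rewrite lt_min e00 he1 ge_min lexx.
move=> /(_ isT isT) => hh.
suff : Num.min e0 e1 * (dotp b q' - e) < c - dotp a q' by lra.
case: (lerP (dotp b q' - e) 0) => hu.
  have : 0 < Num.min e0 e1 by rewrite lt_min e00 he1.
  nra.
have : Num.min e0 e1 <= e0 by rewrite ge_min lexx.
nra.
Qed.

Lemma count_le_in (T : eqType) (P P' : pred T) (l : seq T) :
  (forall q, q \in l -> P' q -> P q) -> (count P' l <= count P l)%N.
Proof.
elim: l => [|a l IH] h //=.
have h' : forall q, q \in l -> P' q -> P q by move=> x xl; apply: h; rewrite in_cons xl orbT.
case: (boolP (P' a)) => ha.
  by rewrite (h a (mem_head a l) ha) /= !add1n ltnS IH.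
rewrite add0n; apply: (leq_trans (IH h')); exact: leq_addl.
Qed.

Lemma count_lt (T : eqType) (P P' : pred T) (l : seq T) :
  (forall q, q \in l -> P' q -> P q) -> (exists2 q, q \in l & P q && ~~ P' q) ->
  (count P' l < count P l)%N.
Proof.
elim: l => [|a l IH] h [q]; first by [].
have hsub : (count P' l <= count P l)%N.
  by apply: count_le_in => x xl; apply: h; rewrite in_cons xl orbT.
rewrite in_cons => /orP [/eqP ->|ql] /andP [hP hP'] /=.
  by rewrite hP (negbTE hP') /= add0n add1n ltnS.
have := IH (fun x xl => h x (@mem_behead _ (a :: l) x xl)) (ex_intro2 _ _ q ql (introT andP (conj hP hP'))).
case: (boolP (P' a)) => ha.
  by rewrite (h a (mem_head a l) ha) /= !add1n ltnS.
move=> hlt; rewrite add0n; apply: (leq_trans hlt); exact: leq_addl.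
Qed.


Lemma cw_convex (R : realType) n (l : seq 'rV[R]_n) x y th :
  0 <= th <= 1 -> cw l x 1 -> cw l y 1 -> cw l (th *: x + (1 - th) *: y) 1.
Proof.
move=> /andP [h0 h1] hx hy.
have h1' : 0 <= 1 - th by lra.
have := cw_add (cw_scale h0 hx) (cw_scale h1' hy).
by rewrite !mulr1 (_ : th + (1 - th) = 1) //; ring.
Qed.

Lemma cw_zero (R : realType) n (l : seq 'rV[R]_n) : cw l 0 0.
Proof.
elim: l => [|a l IH] //=; exists 0 => //.
by rewrite scale0r !subr0.
Qed.

Lemma cw_mem (R : realType) n (l : seq 'rV[R]_n) q : q \in l -> cw l q 1.
Proof.
elim: l => [|a l IH] //; rewrite in_cons => /orP [/eqP ->|/IH h] /=.
  by exists 1 => //; rewrite scale1r !subrr; apply: cw_zero.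
by exists 0 => //; rewrite scale0r !subr0.
Qed.

Lemma key_face (R : realType) d (s : seq 'rV[R]_d) (Z : 'rV[R]_d -> Prop) :
  (forall x, Z x <-> cw s x 1) ->
  (forall F, face Z F -> centrally_symmetric F) ->
  forall N a c, (forall q, q \in s -> dotp a q <= c) ->
  (count (fun q => dotp a q == c) s <= N)%N ->
  forall p, Z p -> dotp a p = c ->
  exists v, [/\ vertex Z v, Z v, dotp a v = c & Z (2%:R *: p - v)].
Proof.
move=> hZ hsym N; elim: N => [|N IH] a c ha hN p hp hap.
  have := cw_to_filter ha ((hZ p).1 hp) (etrans hap (esym (mul1r c))).
  move: hN; rewrite leqn0 -size_filter size_eq0 => /eqP -> /=; case=> _ h.
  by exfalso; move: h; apply/eqP; rewrite oner_eq0.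
set SF := filter (fun q => dotp a q == c) s.
have hZle : forall x, Z x -> dotp a x <= c.
  by move=> x /hZ /(cw_dot ha); rewrite mul1r.
have hSF : forall q, q \in SF -> dotp a q = c.
  by move=> q; rewrite mem_filter => /andP [/eqP].
have hFiff : forall x, (Z x /\ dotp a x = c) <-> cw SF x 1.
  move=> x; split.
    by case=> /hZ hx hax; apply: cw_to_filter => //; rewrite mul1r.
  move=> hx; split; first by apply/hZ; exact: cw_filter_sub hx.
  apply/eqP; rewrite eq_le; apply/andP; split.
    by rewrite -[c]mul1r; apply: (cw_dot _ hx) => q /hSF ->.
  by rewrite -[c]mul1r; apply: (cw_dot_ge _ hx) => q /hSF ->.
have hface : face Z (fun x => Z x /\ dotp a x = c).
  by right; exists a, c; split.
have [c0 hc0] := hsym _ hface.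
have hpF : cw SF p 1 by apply/hFiff.
have hc0F : cw SF c0 1.
  have h2 : cw SF (2%:R *: c0 - p) 1 by apply/hFiff; apply: hc0; apply/hFiff.
  have := cw_convex (th := 1/2%:R) _ hpF h2.
  have -> : 1 / 2%:R *: p + (1 - 1 / 2%:R) *: (2%:R *: c0 - p) = c0.
    by apply/rowP => j; rewrite !mxE; field.
  apply; apply/andP; split; rewrite ?divr_ge0 //; lra.
have hZconv : forall x y th, 0 <= th <= 1 -> Z x -> Z y -> Z (th *: x + (1 - th) *: y).
  by move=> x y th hth /hZ hx /hZ hy; apply/hZ; apply: cw_convex.
case: (boolP (all (fun q => q == p) SF)) => [/allP hall|hnall].
  exists p; split => //.
  - right; exists a, c; split => // x; split.
      by move=> ->.
    move=> /hFiff hx; rewrite (cw_all_eq (p:=p) _ hx) ?scale1r // => q /hall /eqP //.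
  - by rewrite (_ : 2%:R *: p - p = p) //; apply/rowP => j; rewrite !mxE; ring.
have [q qSF qp] : exists2 q, q \in SF & q != p.
  by move/allPn: hnall => [q qS hq]; exists q.
have [x0 [m0 [hx0 hx0F hpx hm0]]] : exists x0 m0,
    [/\ x0 != 0, cw SF (c0 + x0) 1, p = c0 + m0 *: x0 & 0 <= m0 <= 1].
  case: (eqVneq p c0) => hpc.
    exists (q - c0), 0; split.
    - by rewrite subr_eq0 -hpc.
    - by rewrite addrC subrK; apply: cw_mem.
    - by rewrite scale0r addr0.
    - by rewrite lexx ler01.
  exists (p - c0), 1; split.
  - by rewrite subr_eq0.
  - by rewrite addrC subrK.
  - by rewrite scale1r addrC subrK.
  - by rewrite ler01 lexx.
clear q qSF qp.
pose A := fun m : R => 0 <= m /\ cw SF (c0 + m *: x0) 1.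
have hA1 : A 1 by split; rewrite ?ler01 ?scale1r.
have [K hK] := exists_ub (fun q => dotp x0 q) s.
have hxx : 0 < dotp x0 x0 by apply: dotp_gt0.
have hAub : forall m, A m -> m <= (K - dotp x0 c0) / dotp x0 x0.
  move=> m [hm0' hm]; rewrite ler_pdivlMr //.
  have := cw_dot hK (cw_filter_sub hm); rewrite dotpDr dotpZr; lra.
have hsup : has_sup A.
  split; first by exists 1.
  by exists ((K - dotp x0 c0) / dotp x0 x0) => m /hAub.
set M := sup A.
have hMub : forall m, A m -> m <= M by move=> m hm; apply: sup_upper_bound.
have hM1 : 1 <= M by apply: hMub.
set y := c0 + M *: x0.
have hyF : cw SF y 1.
  case: (classic (cw SF y 1)) => // hny; exfalso.
  have [b [be [hb hby]]] := strict_sep hny.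
  have hAb : forall m, A m -> dotp b c0 + m * dotp b x0 <= be.
    by move=> m [_ hm]; have := cw_dot hb hm; rewrite dotpDr dotpZr mul1r.
  move: hby; rewrite /y dotpDr dotpZr => hby.
  case: (lerP (dotp b x0) 0) => hbx.
    have := hAb 1 hA1; nra.
  set eps := (dotp b c0 + M * dotp b x0 - be) / dotp b x0.
  have heps : 0 < eps by rewrite divr_gt0 //; lra.
  have [m hm hmM] := sup_adherent heps hsup.
  have := hAb m hm.
  have hepsb : eps * dotp b x0 = dotp b c0 + M * dotp b x0 - be.
    by rewrite /eps divfK // gt_eqF.
  rewrite -/M in hmM.
  nra.
have [b [hb hbx]] : exists b, (forall q, q \in SF -> dotp b q <= dotp b y) /\ 0 < dotp b x0.
  case: (@farkas R d (size SF) (map (fun q => q - y) SF) x0 (size_map _ _)) =>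
     [[W hW]|[b [hb hbx]]]; last first.
    exists b; split => // q1 q1SF; have := hb _ (map_f (fun q => q - y) q1SF).
    rewrite dotpBr; lra.
  exfalso.
  have hW0 := cw_ge0 hW.
  case: (eqVneq W 0) => hW0'.
    by move: hW; rewrite hW0' => /cw_eq0 h; move/eqP: hx0; apply.
  have hWp : 0 < W by rewrite lt_def hW0' hW0.
  have hWi : 0 < W^-1 by rewrite invr_gt0.
  have := cw_scale (ltW hWi) (cw_shift hW).
  rewrite mulVf // => hh.
  have hA : A (M + W^-1).
    split; first by lra.
    by move: hh; rewrite (_ : W^-1 *: (x0 + W *: y) = c0 + (M + W^-1) *: x0) //;
      rewrite /y; apply/rowP => j; rewrite !mxE; field.
  have := hMub _ hA; lra.
set e := dotp b y.
have [eps heps0 heps] := exists_eps s a c b e.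
set a' := a + eps *: b; set c' := c + eps * e.
have hda : forall q, dotp a' q = dotp a q + eps * dotp b q.
  by move=> q; rewrite /a' dotpDl dotpZl.
have ha' : forall q, q \in s -> dotp a' q <= c'.
  move=> q qs; rewrite hda /c'; have := ha q qs.
  case: (eqVneq (dotp a q) c) => hq hle.
    have qSF : q \in SF by rewrite mem_filter hq eqxx qs.
    have := hb q qSF; rewrite -/e; have := ltW heps0; nra.
  have hlt : dotp a q < c by rewrite lt_def eq_sym hq hle.
  have := heps q qs hlt; lra.
have hP'P : forall q, q \in s -> dotp a' q == c' -> dotp a q == c.
  move=> q qs /eqP; rewrite hda /c' => hq.
  case: (eqVneq (dotp a q) c) => // hne.
  have hlt : dotp a q < c by rewrite lt_def eq_sym hne ha.
  have := heps q qs hlt; lra.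
have hbc0 : dotp b c0 < e.
  rewrite /e /y dotpDr dotpZr; have : 0 < M by lra. nra.
have [q1 q1s hq1] : exists2 q1, q1 \in s & (dotp a q1 == c) && ~~ (dotp a' q1 == c').
  case: (boolP (all (fun q => e <= dotp b q) SF)) => [/allP hall|].
    have := cw_dot_ge (e := e) (b := b) hall hc0F; lra.
  move/allPn => [q1 q1SF hq1]; move: (q1SF); rewrite mem_filter => /andP [hq1a q1s].
  exists q1 => //; rewrite hq1a /= hda /c'; apply/negP => /eqP h.
  move/eqP: hq1a => hq1a; rewrite hq1a in h.
  have : dotp b q1 = e.
    have h2 : eps * dotp b q1 = eps * e by lra.
    exact: (mulfI (negbT (gt_eqF heps0)) h2).
  by move=> hh; move: hq1; rewrite hh lexx.
have hcount : (count (fun q => dotp a' q == c') s <= N)%N.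
  rewrite -ltnS; apply: leq_trans hN; apply: count_lt => //.
  by exists q1.
have [hyZ hya] := (hFiff y).2 hyF.
have hya' : dotp a' y = c' by rewrite hda hya.
have [v [hv hvZ hva' hv2]] := IH a' c' ha' hcount y hyZ hya'.
have hva : dotp a v = c.
  have hvG := cw_to_filter ha' ((hZ v).1 hvZ) (etrans hva' (esym (mul1r c'))).
  have hG : forall q, q \in filter (fun q => dotp a' q == c') s -> dotp a q = c.
    by move=> q; rewrite mem_filter => /andP [hq qs]; apply/eqP; apply: hP'P.
  apply/eqP; rewrite eq_le; apply/andP; split.
    by rewrite -[c]mul1r; apply: (cw_dot _ hvG) => q /hG ->.
  by rewrite -[c]mul1r; apply: (cw_dot_ge _ hvG) => q /hG ->.
exists v; split => //.
have [hcv _] := hc0 v (conj hvZ hva).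
have hM0 : 0 < M by lra.
set th := m0 / M.
have hth : 0 <= th <= 1.
  apply/andP; split; first by rewrite /th divr_ge0 //; [lra|lra].
  by rewrite /th ler_pdivrMr // mul1r; lra.
have := hZconv _ _ _ hth hv2 hcv.
have -> : th *: (2%:R *: y - v) + (1 - th) *: (2%:R *: c0 - v) = 2%:R *: p - v.
  rewrite hpx /y /th; apply/rowP => j; rewrite !mxE; field.
  by rewrite gt_eqF.
done.
Qed.


Lemma vertex_homothet (R : realType) d (Z : 'rV[R]_d -> Prop) l x u :
  0 < l -> vertex Z u -> vertex (homothet l x Z) (l *: u + x).
Proof.
move=> hl [hu|[a [c [hle hiff]]]].
  left => y; split.
    by move=> ->; exists u => //; apply/hu.
  by case=> z /hu -> ->.
right; exists a, (l * c + dotp a x); split.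
  move=> y [z hz ->]; rewrite dotpDr dotpZr.
  have := hle z hz; have := ltW hl; nra.
move=> y; split.
  move=> ->; have [hZu hau] := (hiff u).1 erefl.
  by split; [exists u | rewrite dotpDr dotpZr hau].
case=> [[z hz ->]]; rewrite dotpDr dotpZr => h.
have hza : dotp a z = c.
  have h2 : l * dotp a z = l * c by lra.
  exact: (mulfI (negbT (gt_eqF hl)) h2).
by rewrite ((hiff z).2 (conj hz hza)).
Qed.

Unset Implicit Arguments.

Theorem mainTheorem19 (R : realType) (d : nat) (Z : 'rV[R]_d -> Prop)
  (l1 l2 : R) (x1 x2 : 'rV[R]_d) :
  zonotope Z -> 0 < l1 -> 0 < l2 -> l2 <= l1 ->
  (exists p, homothet l1 x1 Z p /\ homothet l2 x2 Z p) ->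
  exists v, vertex (homothet l2 x2 Z) v /\ homothet l1 x1 Z v.
Proof.
move=> [[s hs] hsym] hl1 hl2 hl12 [p [[z1 hz1 hp1] [z2 hz2 hp2]]].
have hZ : forall x, Z x <-> cw s x 1.
  by move=> x; rewrite -cw_conv; exact: hs.
have hZconv : forall x y th, 0 <= th <= 1 -> Z x -> Z y -> Z (th *: x + (1 - th) *: y).
  by move=> x y th hth /hZ hx /hZ hy; apply/hZ; apply: cw_convex.
have [c0 hc0] := hsym Z (or_introl (fun x => conj id id)).
have hkey : forall y, Z y -> exists v, [/\ vertex Z v, Z v & Z (2%:R *: y - v)].
  move=> y hy.
  have := @key_face R d s Z hZ hsym _ 0 0 _ (leqnn _) y hy.
  case.
  - by move=> q _; rewrite dotp0l.
  - by rewrite dotp0l.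
  - by move=> v [hv hvZ _ h2]; exists v.
set z1s := 2%:R *: c0 - z1.
have hz1s : Z z1s by apply: hc0.
have hl : 0 < l1 + l2 by lra.
set th := l2 / (l1 + l2).
have hth : 0 <= th <= 1.
  apply/andP; split; first by rewrite /th divr_ge0 //; lra.
  by rewrite /th ler_pdivrMr // mul1r; lra.
set y := th *: z2 + (1 - th) *: z1s.
have hy : Z y by apply: hZconv.
have [v [hv hvZ hw]] := hkey y hy.
set w := 2%:R *: y - v.
set mu := l2 / l1.
have hmu : 0 <= mu <= 1.
  apply/andP; split; first by rewrite /mu divr_ge0 //; lra.
  by rewrite /mu ler_pdivrMr // mul1r.
set m := mu *: w + (1 - mu) *: y.
have hm : Z m by apply: hZconv.
have hz : Z (2%:R *: c0 - m) by apply: hc0.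
exists (l2 *: v + x2); split; first exact: vertex_homothet.
exists (2%:R *: c0 - m) => //.
have hx2 : x2 = l1 *: z1 + x1 - l2 *: z2 by rewrite -hp1 hp2 [l2 *: z2 + x2]addrC addrK.
rewrite hx2 /m /w /y /z1s /th /mu; apply/rowP => j; rewrite !mxE.
field; rewrite ?gt_eqF //.
Qed.
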